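(* Let $n\geq 1$ and let $\mathcal{F}$ be a sunflower-free collection of subsets of $\{1,2,\dots,n\}$. Then \[ |\mathcal{F}|\leq 3(n+1)\sum_{0\leq k\leq n/3}\binom{n}{k}, \] and consequently \[ \mu_{3}^{S}\leq\frac{3}{2^{2/3}}=1.889881574\dots \]
   Context: Three sets form a (3-)sunflower if the intersection of any two of them is the same set (i.e. $A\cap B=A\cap C=B\cap C$). A family $\mathcal{F}$ of sets is sunflower-free if no three distinct members of $\mathcal{F}$ form a sunflower. Let $F_3(n)$ denote the maximum size of a sunflower-free collection of subsets of $\{1,2,\dots,n\}$, and define the Erdős–Szemerédi sunflower-free capacity $\mu_3^S=\limsup_{n\to\infty}F_3(n)^{1/n}$. *)

(* Defs.v *)
From HB Require Import structures.
From mathcomp Require Import all_boot all_order all_algebra.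
From mathcomp Require Import all_classical all_reals all_analysis.
Set Implicit Arguments. Unset Strict Implicit. Unset Printing Implicit Defensive.
Import Order.TTheory GRing.Theory Num.Theory.

(* The ground set {1,...,n} is modelled by the finite type 'I_n. *)

Definition is_sunflower (T : finType) (A B C : {set T}) : Prop :=
  A :&: B = A :&: C /\ A :&: C = B :&: C.

Definition sunflower_free (T : finType) (F : {set {set T}}) : Prop :=
  forall A B C, A \in F -> B \in F -> C \in F ->
    A != B -> A != C -> B != C -> ~ is_sunflower A B C.

Definition F3 (n : nat) : nat :=
  \max_(F : {set {set 'I_n}} | `[< sunflower_free F >]) #|F|.

Definition mu3S (R : realType) : \bar R :=
  limn_esup (fun n : nat => (((F3 n)%:R : R) `^ (n%:R^-1))%:E).

(* Main.v *)
Require Import Defs.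
From HB Require Import structures.
From mathcomp Require Import all_boot all_order all_algebra.
From mathcomp Require Import all_classical all_reals all_analysis.
From mathcomp Require Import zify ring lra.
Set Implicit Arguments. Unset Strict Implicit. Unset Printing Implicit Defensive.
Import Order.TTheory GRing.Theory Num.Theory.

Module HA.
Local Open Scope ring_scope.

Lemma rankD_le (F : fieldType) m n (A B : 'M[F]_(m,n)) :
  (\rank (A + B)%R <= \rank A + \rank B)%N.
Proof.
apply: leq_trans (mxrank_adds_leqif A B).1.
by apply: mxrankS; apply: addmx_sub_adds.
Qed.

Lemma core (F : fieldType) (a N : nat) (P : 'M[F]_(a, N)) (d : 'I_a -> F)
  (G H K : 'I_N -> 'I_a -> 'I_a -> F) :
  (forall k, d k != 0) ->
  (forall j k l, ((j == k) && (k == l))%:R * d j =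
     \sum_s P j s * G s k l + \sum_s P k s * H s j l + \sum_s P l s * K s j k) ->
  (a <= 3 * N)%N.
Proof.
move=> dnz hD.
set f := maxrankfun P.
pose Rf : 'M[F]_(\rank P, a) := \matrix_(i, k) (f i == k)%:R.
have RfD : rowsub f 1%:M = Rf by apply/matrixP => i k; rewrite !mxE.
have : (P <= rowsub f P)%MS by rewrite eq_maxrowsub.
case/submxP => C; rewrite rowsubE RfD => hC.
pose v : 'rV[F]_a := const_mx 1 - const_mx 1 *m C *m Rf.
have hv : v *m P = 0.
  by rewrite /v mulmxBl -!mulmxA -hC subrr.
have finj : injective f by apply: maxrankfun_inj.
have RfE i k : Rf i k = (f i == k)%:R by rewrite !mxE.
have hv1 k : k \notin codom f -> v 0 k = 1.
  move=> nk; rewrite /v !mxE big1 ?subr0 // => i _.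
  rewrite RfE; case: eqP => [e|]; last by rewrite mulr0.
  by case/negP: nk; rewrite -e codom_f.
pose H' : 'M[F]_(N, a) := \matrix_(s, l) \sum_j v 0 j * H s j l.
pose K' : 'M[F]_(N, a) := \matrix_(s, k) \sum_j v 0 j * K s j k.
pose M : 'M[F]_a := P *m H' + (P *m K')^T.
have ME k l : M k l = (k == l)%:R * (v 0 k * d k).
  have -> : M k l = \sum_j v 0 j * (((j == k) && (k == l))%:R * d j).
    under eq_bigr do rewrite hD.
    rewrite /M !mxE.
    under eq_bigr do rewrite !mulrDr.
    rewrite !big_split /=.
    have -> : \sum_j v 0 j * \sum_s P j s * G s k l = 0.
      under eq_bigr do rewrite big_distrr.
      rewrite exchange_big /= big1 // => s _.
      have : (v *m P) 0 s = 0 by rewrite hv mxE.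
      rewrite mxE => hs.
      under eq_bigr do rewrite mulrA.
      by rewrite -big_distrl /= hs mul0r.
    rewrite add0r; congr (_ + _).
      rewrite /H'; under [RHS]eq_bigr do rewrite big_distrr.
      rewrite exchange_big /=; apply: eq_bigr => s _; rewrite mxE big_distrr /=.
      by apply: eq_bigr => j _; rewrite mulrCA.
    rewrite /K'; under [RHS]eq_bigr do rewrite big_distrr.
    rewrite exchange_big /=; apply: eq_bigr => s _; rewrite mxE big_distrr /=.
    by apply: eq_bigr => j _; rewrite mulrCA.
  rewrite (bigD1 k) //= big1 ?addr0; last first.
    by move=> j /negbTE ->; rewrite /= mul0r mulr0.
  by rewrite eqxx /= mulrCA.
pose E : 'M[F]_a := \matrix_(k, l) (((k == l) && (k \notin codom f))%:R / d k).
pose Dc : 'M[F]_a := \matrix_(k, l) ((k == l) && (k \notin codom f))%:R.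
have DcE : M *m E = Dc.
  apply/matrixP => k l; rewrite !mxE (bigD1 k) //= big1 ?addr0; last first.
    by move=> j hj; rewrite ME eq_sym (negbTE hj) !mul0r.
  rewrite ME eqxx mul1r.
  case: (boolP (k \notin codom f)) => hk; last by rewrite [E k l]mxE (negbTE hk) andbF mul0r mulr0.
  rewrite hv1 // mul1r [E k l]mxE hk andbT. by rewrite mulrC divfK.
have RRE : Rf^T *m Rf + Dc = 1%:M.
  apply/matrixP => k l; rewrite !mxE.
  under eq_bigr do rewrite !mxE.
  case: (boolP (k \in codom f)) => hk.
    case/codomP: hk => i0 ->.
    rewrite (bigD1 i0) //= big1 ?addr0; last first.
      move=> i ne.
      by case: eqP => [/finj e|]; [rewrite e eqxx in ne|rewrite mul0r].
    by rewrite eqxx mul1r andbF addr0.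
  rewrite big1 ?add0r; last first.
    move=> i _; case: eqP => [e|]; last by rewrite mul0r.
    by case/negP: hk; rewrite -e codom_f.
  by rewrite andbT.
have : (a <= \rank (Rf^T *m Rf) + \rank Dc)%N.
  by rewrite -{1}(mxrank1 F a) -RRE rankD_le.
move=> ha; apply: leq_trans ha _.
have h1 : (\rank (Rf^T *m Rf) <= N)%N.
  apply: leq_trans (mxrankM_maxl _ _) _; rewrite mxrank_tr.
  apply: leq_trans (rank_leq_row _) _; exact: rank_leq_col.
have h2 : (\rank Dc <= N + N)%N.
  rewrite -DcE; apply: leq_trans (mxrankM_maxl _ _) _.
  apply: leq_trans (rankD_le _ _) _; rewrite mxrank_tr.
  by apply: leq_add; apply: leq_trans (mxrankM_maxl _ _) (rank_leq_col _).
by apply: leq_trans (leq_add h1 h2) _; rewrite !mulSn mul0n addn0.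
Qed.
Section CombS.
Variable n : nat.
Implicit Types X Y Z S : {set 'I_n}.

Definition Ss : {set {set 'I_n}} := [set S : {set 'I_n} | (3 * #|S| <= n)%N].
Definition fac X Y Z (i : 'I_n) : rat :=
  2 - (i \in X)%:R - (i \in Y)%:R - (i \in Z)%:R.
Definition polyF X Y Z : rat := \prod_i fac X Y Z i.

Definition term (i : 'I_n) (c : 'I_4) X Y Z : rat :=
  match val c with 0 => 2 | 1 => - (i \in X)%:R | 2 => - (i \in Y)%:R
  | _ => - (i \in Z)%:R end.

Definition Sc (g : {ffun 'I_n -> 'I_4}) (c : nat) : {set 'I_n} :=
  [set i | val (g i) == c].
Definition coef (g : {ffun 'I_n -> 'I_4}) : rat :=
  \prod_i (if val (g i) == 0%N then 2 else -1).

Lemma prod_bool (I : finType) (B : pred I) :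
  \prod_(i : I) (B i)%:R = [forall i, B i]%:R :> rat.
Proof.
case e: [forall i, B i].
  by rewrite big1 // => i _; move/forallP: e => ->.
move/negbT/forallPn: e => [i /negbTE Bi].
by rewrite (bigD1 i) //= Bi mul0r.
Qed.

Lemma and3_nat (a b c : bool) : ([&& a, b & c])%:R = a%:R * b%:R * c%:R :> rat.
Proof. by case: a; case: b; case: c; rewrite ?mul1r ?mul0r ?mulr0. Qed.

Lemma term_prod X Y Z (g : {ffun 'I_n -> 'I_4}) :
  \prod_i term i (g i) X Y Z =
  coef g * ([&& Sc g 1 \subset X, Sc g 2 \subset Y & Sc g 3 \subset Z])%:R.
Proof.
have -> : [&& Sc g 1 \subset X, Sc g 2 \subset Y & Sc g 3 \subset Z] =
   [forall i, [&& (val (g i) == 1%N) ==> (i \in X), (val (g i) == 2%N) ==> (i \in Y)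
        & (val (g i) == 3%N) ==> (i \in Z)]].
  apply/idP/idP.
    case/and3P => /fintype.subsetP h1 /fintype.subsetP h2 /fintype.subsetP h3; apply/forallP => i.
    apply/and3P; split; apply/implyP => e.
    - by apply: h1; rewrite inE e.
    - by apply: h2; rewrite inE e.
    - by apply: h3; rewrite inE e.
  move/forallP => h; apply/and3P; split; apply/fintype.subsetP => i; rewrite inE => e;
    case/and3P: (h i) => h1 h2 h3.
  - exact: (implyP h1).
  - exact: (implyP h2).
  - exact: (implyP h3).
rewrite -prod_bool /coef -big_split /=; apply: eq_bigr => i _.
rewrite /term; case: (g i) => [[|[|[|[|c]]]] hc] //=.
- by case: (i \in X); rewrite /= ?mulr1n ?mulr0n ?mulN1r ?mulr1 ?mulr0 ?oppr0.
- by case: (i \in Y); rewrite /= ?mulr1n ?mulr0n ?mulN1r ?mulr1 ?mulr0 ?oppr0.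
- by case: (i \in Z); rewrite /= ?mulr1n ?mulr0n ?mulN1r ?mulr1 ?mulr0 ?oppr0.
Qed.

Lemma fac_sum X Y Z i : fac X Y Z i = \sum_(c < 4) term i c X Y Z.
Proof.
by rewrite !big_ord_recl big_ord0 /fac /term /= addr0 !addrA.
Qed.

Lemma card3 (g : {ffun 'I_n -> 'I_4}) : (#|Sc g 1| + #|Sc g 2| + #|Sc g 3| <= n)%N.
Proof.
have d12 : Sc g 1 :&: Sc g 2 = finset.set0.
  by apply/setP => i; rewrite !inE; case: (val (g i)) => [|[|[|]]].
have d3 : (Sc g 1 :|: Sc g 2) :&: Sc g 3 = finset.set0.
  by apply/setP => i; rewrite !inE; case: (val (g i)) => [|[|[|]]].
rewrite -cardsUI d12 cards0 addn0 -cardsUI d3 cards0 addn0.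
by apply: leq_trans (max_card _) _; rewrite card_ord.
Qed.

Lemma decomp : exists G H K : {set 'I_n} -> {set 'I_n} -> {set 'I_n} -> rat,
  forall X Y Z, polyF X Y Z =
    \sum_(S in Ss) (S \subset X)%:R * G S Y Z +
    \sum_(S in Ss) (S \subset Y)%:R * H S X Z +
    \sum_(S in Ss) (S \subset Z)%:R * K S X Y.
Proof.
pose c1 (g : {ffun 'I_n -> 'I_4}) := (3 * #|Sc g 1| <= n)%N.
pose c2 (g : {ffun 'I_n -> 'I_4}) := (3 * #|Sc g 2| <= n)%N.
exists (fun S Y Z => \sum_(g | c1 g && (Sc g 1 == S)) coef g * (Sc g 2 \subset Y)%:R * (Sc g 3 \subset Z)%:R).
exists (fun S X Z => \sum_(g | (~~ c1 g && c2 g) && (Sc g 2 == S)) coef g * (Sc g 1 \subset X)%:R * (Sc g 3 \subset Z)%:R).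
exists (fun S X Y => \sum_(g | (~~ c1 g && ~~ c2 g) && (Sc g 3 == S)) coef g * (Sc g 1 \subset X)%:R * (Sc g 2 \subset Y)%:R).
move=> X Y Z.
rewrite /polyF; under eq_bigr do rewrite fac_sum.
rewrite bigA_distr_bigA /=.
under eq_bigr do rewrite term_prod.
rewrite (bigID c1) /= [X in _ + X](bigID c2) /= addrA.
congr (_ + _ + _).
- rewrite (partition_big (fun g => Sc g 1) (mem Ss)) /=; last by move=> g h; rewrite inE.
  apply: eq_bigr => S _; rewrite big_distrr /=; apply: eq_bigr => g /andP[_ /eqP <-].
  by rewrite and3_nat; ring.
- rewrite (partition_big (fun g => Sc g 2) (mem Ss)) /=; last by move=> g /andP[_ h]; rewrite inE.
  apply: eq_bigr => S _; rewrite big_distrr /=; apply: eq_bigr => g /andP[_ /eqP <-].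
  by rewrite and3_nat; ring.
- rewrite (partition_big (fun g => Sc g 3) (mem Ss)) /=; last first.
    move=> g /andP[h1 h2]; rewrite inE; have := card3 g; move: h1 h2; rewrite /c1 /c2; lia.
  apply: eq_bigr => S _; rewrite big_distrr /=; apply: eq_bigr => g /andP[_ /eqP <-].
  by rewrite and3_nat; ring.
Qed.


Lemma fac0 X Y Z i :
  ((i \in X) + (i \in Y) + (i \in Z) == 2)%N -> fac X Y Z i = 0.
Proof.
rewrite /fac; case: (i \in X); case: (i \in Y); case: (i \in Z) => //= _;
  rewrite ?subr0; ring.
Qed.

Lemma poly0 X Y Z :
  [exists i, ((i \in X) + (i \in Y) + (i \in Z) == 2)%N] -> polyF X Y Z = 0.
Proof.
by case/existsP => i hi; rewrite /polyF (bigD1 i) //= fac0 // mul0r.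
Qed.

Lemma polyXXX X : polyF X X X != 0.
Proof.
rewrite /polyF; apply/prodf_neq0 => i _.
rewrite /fac; by case: (i \in X).
Qed.

Lemma not_sub_eqcard X Y : #|X| = #|Y| -> X != Y -> exists2 i, i \in X & i \notin Y.
Proof.
move=> hc ne; have : ~~ (X \subset Y).
  by apply: contra ne => h; rewrite eqEcard h hc leqnn.
by case/fintype.subsetPn => i; exists i.
Qed.

Lemma poly_diag X Y Z : #|X| = #|Y| -> #|Y| = #|Z| ->
  (X != Y -> X != Z -> Y != Z -> ~ (X :&: Y = X :&: Z /\ X :&: Z = Y :&: Z)) ->
  polyF X Y Z = ((X == Y) && (Y == Z))%:R * polyF X X X.
Proof.
move=> hXY hYZ hsf.
have [eXY|nXY] := eqVneq X Y.
  subst Y; have [eXZ|nXZ] := eqVneq X Z; first by subst Z; rewrite mul1r.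
  rewrite mul0r poly0 //; have [i iX iZ] := not_sub_eqcard hYZ nXZ.
  by apply/existsP; exists i; rewrite iX (negbTE iZ).
rewrite mul0r poly0 //.
have [eXZ|nXZ] := eqVneq X Z.
  subst Z; have [i iX iY] := not_sub_eqcard hXY nXY.
  by apply/existsP; exists i; rewrite iX (negbTE iY).
have [eYZ|nYZ] := eqVneq Y Z.
  subst Z; have nYX : Y != X by rewrite eq_sym.
  have [i iY iX] := not_sub_eqcard (esym hXY) nYX.
  by apply/existsP; exists i; rewrite iY (negbTE iX).
apply: contraT => hn; case: (hsf nXY nXZ nYZ).
have h i : ((i \in X) + (i \in Y) + (i \in Z) != 2)%N.
  by apply/negP => e; apply: (negP hn); apply/existsP; exists i.
split; apply/setP => i; have := h i; rewrite !inE;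
  by case: (i \in X); case: (i \in Y); case: (i \in Z).
Qed.

End CombS.

Local Open Scope ring_scope.

Lemma sizebound n (F : {set {set 'I_n}}) m : sunflower_free F ->
  (#|[set X in F | #|X| == m]| <= 3 * #|Ss n|)%N.
Proof. 
move=> sf.
set Fm := [set X in F | #|X| == m].
have [G [H [K hdec]]] := decomp n.
pose ev (j : 'I_#|Fm|) : {set 'I_n} := enum_val j.
pose es (s : 'I_#|Ss n|) : {set 'I_n} := enum_val s.
have evF j : ev j \in F by have := enum_valP j; rewrite inE => /andP[].
have evm j : #|ev j| = m by have := enum_valP j; rewrite inE => /andP[_ /eqP].
have evinj : injective ev by apply: enum_val_inj.
apply: (@core _ #|Fm| #|Ss n| (\matrix_(j, s) (es s \subset ev j)%:R)
  (fun j => polyF (ev j) (ev j) (ev j))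
  (fun s k l => G (es s) (ev k) (ev l)) (fun s j l => H (es s) (ev j) (ev l))
  (fun s j k => K (es s) (ev j) (ev k))).
  by move=> k; exact: polyXXX.
move=> j k l.
rewrite -(inj_eq evinj) -[k == l](inj_eq evinj).
rewrite -poly_diag ?evm //; last first.
  by move=> h1 h2 h3; apply: (sf _ _ _ (evF j) (evF k) (evF l) h1 h2 h3).
rewrite hdec.
congr (_ + _ + _); rewrite (big_enum_val (A := mem (Ss n))); apply: eq_bigr => s _; rewrite mxE.
all: done.
Qed.

End HA.
Import HA.

Module HB2.

Lemma card_le_n n (X : {set 'I_n}) : (#|X| < n.+1)%N.
Proof. by rewrite ltnS; apply: leq_trans (max_card _) _; rewrite card_ord. Qed.

Lemma card_Ss n : #|Ss n| = (\sum_(k < n.+1 | 3 * k <= n) 'C(n, k))%N.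
Proof.
rewrite -sum1_card (partition_big (fun S : {set 'I_n} => (inord #|S| : 'I_n.+1)) xpredT) //=.
rewrite [RHS]big_mkcond /=; apply: eq_bigr => k _.
have e (S : {set 'I_n}) : ((inord #|S| : 'I_n.+1) == k) = (#|S| == k).
  rewrite -(inj_eq val_inj) /= inordK //; exact: card_le_n.
under eq_bigl do rewrite e.
case: ifP => hk.
  rewrite -[X in 'C(X, _)](card_ord n) -card_draws -sum1_card.
  apply: eq_bigl => S; rewrite !inE; apply/andP/eqP => [[_ /eqP //]|h].
  by rewrite h hk eqxx.
rewrite big1 // => S /andP[]; rewrite inE => h /eqP e2.
by rewrite e2 hk in h.
Qed.

Lemma part1 n (F : {set {set 'I_n}}) : sunflower_free F ->
  (#|F| <= 3 * n.+1 * \sum_(k < n.+1 | 3 * k <= n) 'C(n, k))%N.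
Proof.
move=> sf; rewrite -card_Ss.
rewrite -sum1_card (partition_big (fun S : {set 'I_n} => (inord #|S| : 'I_n.+1)) xpredT) //=.
apply: leq_trans (_ : (\sum_(m < n.+1) 3 * #|Ss n|)%N <= _)%N.
  apply: leq_sum => m _; apply: leq_trans (sizebound m sf).
  rewrite -sum1_card; apply: eq_leq; apply: eq_bigl => S; rewrite !inE.
  by rewrite -(inj_eq val_inj) /= inordK ?(card_le_n S).
by rewrite sum_nat_const card_ord mulnCA mulnA.
Qed.

End HB2.
Import HB2.

Module HC.
Local Open Scope ring_scope.

Section Ana.
Variable R : realType.

Lemma growth (e : R) : 0 < e -> exists M, forall n, (M <= n)%N ->
  3 * (n.+1)%:R <= (1 + e) ^+ n.
Proof.
move=> e0.
have [M1 _ hM1] := nbhs_infty_ger (12 / e ^+ 2).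
exists (maxn M1 3) => n; rewrite geq_max => /andP[h1 h3].
have hn := hM1 n h1.
have n3 : (3 : R) <= n%:R by rewrite (ler_nat R 3 n).
rewrite addrC exprD1n (bigD1 (inord 2)) //= inordK ?ltnS; last by apply: leq_trans h3.
have hb : ('C(n, 2)%:R : R) * 2 = n%:R * (n%:R - 1).
  have := mul_bin_diag n 1; rewrite bin1 => h.
  have e2 : (n * n.-1 = 2 * 'C(n, 2))%N by rewrite h.
  have := congr1 (fun x : nat => x%:R : R) e2; rewrite /= !natrM => e3.
  rewrite mulrC -e3 -subn1 natrB //; by apply: leq_trans h3.
have rest : 0 <= \sum_(i < n.+1 | i != inord 2) e ^+ i *+ 'C(n, i).
  by apply: sumr_ge0 => i _; apply: mulrn_wge0; apply: exprn_ge0; apply: ltW.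
rewrite -mulr_natr.
have he : 12 <= e ^+ 2 * n%:R.
  by rewrite -ler_pdivrMl ?exprn_gt0 // mulrC.
have : 3 * (n.+1)%:R <= e ^+ 2 * 'C(n, 2)%:R.
  have k1 : 12 * (n%:R - 1) <= e ^+ 2 * n%:R * (n%:R - 1).
    by rewrite ler_wpM2r // subr_ge0; lra.
  have k2 : e ^+ 2 * 'C(n, 2)%:R * 2 = e ^+ 2 * n%:R * (n%:R - 1).
    by rewrite -mulrA hb mulrA.
  rewrite -natr1; lra.
lra.
Qed.


Definition bb : R := 3 / 2 `^ (2 / 3 : R).

Lemma c_gt0 : (0 : R) < 2 `^ (2 / 3 : R).
Proof. by apply: powR_gt0. Qed.

Lemma bb_gt0 : 0 < bb.
Proof. by rewrite /bb divr_gt0 // c_gt0. Qed.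

Lemma sum_bound n :
  ((\sum_(k < n.+1 | (3 * k <= n)%N) 'C(n, k))%:R : R) <= bb ^+ n.
Proof.
have c0 := c_gt0.
rewrite /bb expr_div_n ler_pdivlMr ?exprn_gt0 //.
rewrite -powR_mulrn; last exact: ltW.
rewrite -powRrM natr_sum big_distrl /=.
have -> : (3 : R) ^+ n = \sum_(i < n.+1) 2 ^+ (n - i) *+ 'C(n, i).
  rewrite (_ : (3 : R) = 2 + 1); last by lra.
  by rewrite exprDn; apply: eq_bigr => i _; rewrite expr1n mulr1.
apply: le_trans (_ : _ <= \sum_(i < n.+1 | (3 * i <= n)%N) 2 ^+ (n - i) *+ 'C(n, i)) _.
  apply: ler_sum => i hi; rewrite mulrC -(mulr_natr (2 ^+ (n - i) : R)); apply: ler_wpM2r => //.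
  rewrite -powR_mulrn //; apply: ler_powR; first by lra.
  have hin : (i <= n)%N by apply: leq_trans (leq_pmull _ _) hi.
  rewrite natrB // mulrC.
  have : (3 * i%:R <= n%:R :> R) by rewrite -(natrM R 3 i) ler_nat.
  lra.
rewrite [X in _ <= X](bigID (fun i : 'I_n.+1 => (3 * i <= n)%N)) /= lerDl.
by apply: sumr_ge0 => i _; apply: mulrn_wge0; apply: exprn_ge0.
Qed.

Lemma F3_nat n : (F3 n <= 3 * n.+1 * \sum_(k < n.+1 | 3 * k <= n) 'C(n, k))%N.
Proof.
apply/bigmax_leqP => F /asboolP hF; exact: part1 hF.
Qed.


Lemma root_pow (x : R) n : 0 <= x -> (0 < n)%N -> (x ^+ n) `^ (n%:R^-1) = x.
Proof.
move=> x0 n0; rewrite -(powR_mulrn _ x0) -powRrM mulfV ?powRr1 //.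
by rewrite pnatr_eq0 -lt0n.
Qed.

Lemma u_bound n : (0 < n)%N ->
  ((F3 n)%:R : R) `^ (n%:R^-1) <= (3 * (n.+1)%:R) `^ (n%:R^-1) * bb.
Proof.
move=> n0.
have b0 := bb_gt0.
have h : ((F3 n)%:R : R) <= 3 * (n.+1)%:R * bb ^+ n.
  apply: le_trans (_ : ((3 * n.+1 * \sum_(k < n.+1 | 3 * k <= n) 'C(n, k))%N%:R : R) <= _).
    by rewrite ler_nat F3_nat.
  rewrite natrM (natrM _ 3); apply: ler_wpM2l; last exact: sum_bound.
  by apply: mulr_ge0.
have r0 : (0:R) <= n%:R^-1 by rewrite invr_ge0.
have x0 : ((F3 n)%:R : R) \in Num.nneg by rewrite nnegrE.
have y0 : 3 * (n.+1)%:R * bb ^+ n \in Num.nneg.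
  by rewrite nnegrE; apply: mulr_ge0 => //; apply: exprn_ge0; apply: ltW.
apply: le_trans (ge0_ler_powR r0 x0 y0 h) _.
rewrite powRM; [|by []|by apply: exprn_ge0; apply: ltW].
by rewrite root_pow //; apply: ltW.
Qed.

Lemma mu_bound : (mu3S R <= bb%:E)%E.
Proof.
apply/lee_addgt0Pr => e e0.
have b0 := bb_gt0.
have d0 : 0 < e / bb by apply: divr_gt0.
have [M hM] := growth d0.
rewrite /mu3S limn_esup_lim; apply: lime_le; first exact: is_cvg_esups.
exists M.+1 => // N /= hN.
apply: ge_ereal_sup => _ [k /= hk <-].
have k0 : (0 < k)%N by apply: leq_trans hk; apply: leq_trans hN.
have hk1 : (M <= k)%N by apply: leq_trans (leqnSn M) (leq_trans hN hk).
rewrite -EFinD lee_fin; apply: le_trans (u_bound k0) _.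
have g : (3 * (k.+1)%:R) `^ (k%:R^-1) <= 1 + e / bb.
  have r0 : (0:R) <= k%:R^-1 by rewrite invr_ge0.
  have x0 : (3 * (k.+1)%:R : R) \in Num.nneg by rewrite nnegrE.
  have y0 : (1 + e / bb) ^+ k \in Num.nneg.
    by rewrite nnegrE; apply: exprn_ge0; apply: addr_ge0 => //; apply: ltW.
  have := ge0_ler_powR r0 x0 y0 (hM k hk1).
  by rewrite root_pow //; apply: addr_ge0 => //; apply: ltW.
apply: le_trans (ler_wpM2r (ltW b0) g) _.
by rewrite mulrDl mul1r divfK ?gt_eqF.
Qed.

End Ana.

End HC.
Import HC.

Theorem theorem1p3 (R : realType) :
  (forall (n : nat) (F : {set {set 'I_n}}), (1 <= n)%N -> sunflower_free F ->
     (#|F| <= 3 * n.+1 * \sum_(k < n.+1 | 3 * k <= n) 'C(n, k))%N)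
  /\ (mu3S R <= ((3 : R) / ((2 : R) `^ (2 / 3 : R)))%:E)%E.
Proof.
split.
  by move=> n F _ sf; exact: part1.
exact: (mu_bound R).
Qed.
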